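(* Let $A$ be a commutative unitary ring. The following are equivalent: (i) $A$ is a BL-ring; (ii) $(K:[I\otimes(J:I)])=(K:I)+(K:J)$ for all ideals $I,J,K$ of $A$.
   Context: For a commutative unitary ring $A$, $Id(A)$ is the set of ideals. For $I,J\in Id(A)$: $I+J=\{i+j: i\in I,j\in J\}$, $I\otimes J=\{\sum_{k=1}^n i_kj_k: i_k\in I, j_k\in J\}$ (ideal product), $(I:J)=\{x\in A: xJ\subseteq I\}$. Then $(Id(A),\cap,+,\otimes,\rightarrow,\{0\},A)$ with $I\rightarrow J=(J:I)$ and order $\subseteq$ is a residuated lattice. A residuated lattice is a bounded lattice with a commutative ordered monoid operation $\odot$ with unit $1$ and an operation $\rightarrow$ with $z\leq x\rightarrow y$ iff $x\odot z\leq y$; a BL-algebra is a residuated lattice satisfying $(x\rightarrow y)\vee(y\rightarrow x)=1$ and $x\odot(x\rightarrow y)=x\wedge y$. A BL-ring is a commutative unitary ring $A$ whose residuated lattice of ideals $Id(A)$ is a BL-algebra. *)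

(* Defs.v *)
(* Ideals of a commutative unitary ring A are represented as
   predicates A -> Prop satisfying the ideal axioms; ideal equality is
   extensional (pointwise <->). *)
From mathcomp Require Import all_boot all_algebra.
Set Implicit Arguments. Unset Strict Implicit. Unset Printing Implicit Defensive.
Import GRing.Theory.
Local Open Scope ring_scope.

Section IdealOps.
Variable A : comPzRingType.

Definition is_ideal (I : A -> Prop) : Prop :=
  [/\ I 0, (forall x y, I x -> I y -> I (x + y)) & (forall a x, I x -> I (a * x))].

Definition seteq (I J : A -> Prop) : Prop := forall x, I x <-> J x.

Definition idT : A -> Prop := fun _ => True.

Definition id_cap (I J : A -> Prop) : A -> Prop := fun x => I x /\ J x.

Definition id_sum (I J : A -> Prop) : A -> Prop :=
  fun x => exists i j, [/\ I i, J j & x = i + j].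

Definition id_prod (I J : A -> Prop) : A -> Prop :=
  fun x => exists (n : nat) (f g : 'I_n -> A),
    [/\ forall k, I (f k), forall k, J (g k) & x = \sum_(k < n) f k * g k].

Definition id_colon (I J : A -> Prop) : A -> Prop :=
  fun x => forall j, J j -> I (x * j).

(* residuum in Id(A): I -> J = (J : I) *)
Definition id_impl (I J : A -> Prop) : A -> Prop := id_colon J I.

(* Id(A) is always a residuated lattice (join = +, meet = ∩, ⊙ = ⊗, top = A);
   it is a BL-algebra iff in addition prelinearity and divisibility hold. *)
Definition BL_ring : Prop :=
  forall I J : A -> Prop, is_ideal I -> is_ideal J ->
    seteq (id_sum (id_impl I J) (id_impl J I)) idT /\
    seteq (id_prod I (id_impl I J)) (id_cap I J).

End IdealOps.

(* Main.v *)
Require Import Defs.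
From mathcomp Require Import all_boot all_algebra.
Import GRing.Theory.
Local Open Scope ring_scope.
Set Implicit Arguments.

Section Helpers.
Variable A : comPzRingType.

Lemma ideal_sum (I : A -> Prop) n (F : 'I_n -> A) :
  is_ideal I -> (forall k, I (F k)) -> I (\sum_(k < n) F k).
Proof.
move=> [I0 ID IM] HF; apply: (big_ind I) => // i _; exact: HF.
Qed.

Lemma prod_ideal (I J : A -> Prop) : is_ideal I -> is_ideal J -> is_ideal (id_prod I J).
Proof.
move=> [I0 ID IM] [J0 _ _].
split.
- exists 0%N, (fun _ => 0), (fun _ => 0); split; [by move=> _ | by move=> _ | by rewrite big_ord0].
- move=> x y [n [f [g [Hf Hg ->]]]] [m [f' [g' [Hf' Hg' ->]]]].
  exists (n + m)%N,
    (fun k => match split k with inl i => f i | inr j => f' j end),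
    (fun k => match split k with inl i => g i | inr j => g' j end).
  split.
  + by move=> k; case: (split k).
  + by move=> k; case: (split k).
  + rewrite big_split_ord /=; congr (_ + _); apply: eq_bigr => i _.
    * by rewrite (unsplitK (inl i)).
    * by rewrite (unsplitK (inr i)).
- move=> a x [n [f [g [Hf Hg ->]]]].
  exists n, (fun k => a * f k), g; split => //.
  + by move=> k; apply: IM.
  + by rewrite mulr_sumr; apply: eq_bigr => i _; rewrite mulrA.
Qed.

Lemma colon_ideal (I J : A -> Prop) : is_ideal J -> is_ideal (id_colon J I).
Proof.
move=> [J0 JD JM]; split.
- by move=> j _; rewrite mul0r.
- by move=> x y Hx Hy j Hj; rewrite mulrDl; apply: JD; [apply: Hx | apply: Hy].
- by move=> a x Hx j Hj; rewrite -mulrA; apply: JM; apply: Hx.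
Qed.

Lemma cap_ideal (I J : A -> Prop) : is_ideal I -> is_ideal J -> is_ideal (id_cap I J).
Proof.
move=> [I0 ID IM] [J0 JD JM]; split.
- by split.
- by move=> x y [? ?] [? ?]; split; [apply: ID | apply: JD].
- by move=> a x [? ?]; split; [apply: IM | apply: JM].
Qed.

Lemma prod_sub_cap (I J : A -> Prop) p : is_ideal I -> is_ideal J ->
  id_prod I (id_colon J I) p -> id_cap I J p.
Proof.
move=> HI HJ [n [f [g [Hf Hg ->]]]].
apply: ideal_sum; first exact: cap_ideal.
move=> k; case: HI => [_ _ IM]; split.
- by rewrite mulrC; apply: IM.
- by rewrite mulrC; apply: Hg.
Qed.

End Helpers.

Theorem corollary3p6 (A : comPzRingType) :
  BL_ring A <->
  (forall I J K : A -> Prop, is_ideal I -> is_ideal J -> is_ideal K ->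
     seteq (id_colon K (id_prod I (id_colon J I)))
           (id_sum (id_colon K I) (id_colon K J))).
Proof.
split.
- move=> BL I J K HI HJ HK x.
  have [Hpl Hdiv] := BL I J HI HJ.
  have [_ JD JM] := HJ; have [_ ID IM] := HI; have [_ KD KM] := HK.
  split.
  + move=> Hx.
    have [a [b [Ha Hb E1]]] := proj2 (Hpl 1) Logic.I.
    exists (x * a), (x * b); split.
    * move=> i Hi; rewrite -mulrA; apply: Hx; apply/(Hdiv (a * i)).
      by split; [apply: IM | apply: Ha].
    * move=> j Hj; rewrite -mulrA; apply: Hx; apply/(Hdiv (b * j)).
      by split; [apply: Hb | apply: JM].
    * by rewrite -mulrDr -E1 mulr1.
  + move=> [u [v [Hu Hv ->]]] p Hp.
    have [Hpi Hpj] := proj1 (Hdiv p) Hp.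
    by rewrite mulrDl; apply: KD; [apply: Hu | apply: Hv].
- move=> H I J HI HJ; split.
  + move=> x; split => // _.
    have HC := cap_ideal HI HJ.
    have [a [b [Ha Hb E]]] := proj1 (H I J _ HI HJ HC 1)
      (fun p Hp => eq_ind_r _ (prod_sub_cap HI HJ Hp) (mul1r p)).
    have [_ JD JM] := HJ; have [_ ID IM] := HI.
    exists (x * a), (x * b); split.
    * by move=> i Hi; rewrite -mulrA; apply: JM; case: (Ha i Hi).
    * by move=> j Hj; rewrite -mulrA; apply: IM; case: (Hb j Hj).
    * by rewrite -mulrDr -E mulr1.
  + move=> x; split; first exact: prod_sub_cap.
    move=> [Hxi Hxj].
    have HP := prod_ideal HI (colon_ideal I HJ).
    have [a [b [Ha Hb E]]] := proj1 (H I J _ HI HJ HP 1)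
      (fun p Hp => eq_ind_r _ Hp (mul1r p)).
    have [_ PD _] := HP.
    by rewrite -[x]mul1r E mulrDl; apply: PD; [apply: Ha | apply: Hb].
Qed.
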